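(* Let $S=(\mathcal R,\Gamma\Rightarrow x:A)$ be quasi-tree-like, let $\mathcal B\in\mathsf{BIGL}$ and let $\mathcal I$ be an interpretation of $S$ into $\mathcal B$ with $\mathcal B,\mathcal I\not\models S$. Then for any instance of a rule of $\mathsf{labIK4}$ other than thinning whose conclusion is $S$, there is a premiss $S'$ of that instance and an interpretation $\mathcal I'$ of $S'$ into $\mathcal B$ such that $\mathcal B,\mathcal I'\not\models S'$ and $\mathcal I'(z)\ge\mathcal I(z)$ for all $z\in\mathrm{Var}(S)$.
   Context: Modal formulas: $A ::= p \mid \bot \mid A\wedge A \mid A \vee A \mid A \to A \mid \Box A \mid \Diamond A$. Labelled sequents $\mathcal R,\Gamma\Rightarrow\Delta$: $\mathcal R$ a set of relational atoms $xRy$, $\Gamma,\Delta$ multisets of labelled formulas $x:A$; $\mathrm{Var}$ = labels occurring. $\mathsf{labK4}$ rules (premisses / conclusion): id $\mathcal R,x:p\Rightarrow x:p$; $\bot$L $\mathcal R,x:\bot,\Gamma\Rightarrow\Delta$; cut: $\mathcal R,\Gamma\Rightarrow\Delta,x:A$ and $\mathcal R,\Gamma',x:A\Rightarrow\Delta'$ / $\mathcal R,\Gamma,\Gamma'\Rightarrow\Delta,\Delta'$; left/right weakening and contraction; thinning $\mathcal R,\Gamma\Rightarrow\Delta$ / $\mathcal R,\mathcal R',\Gamma\Rightarrow\Delta$; $\to$L: $\mathcal R,\Gamma\Rightarrow\Delta,x:A$ and $\mathcal R,\Gamma',x:B\Rightarrow\Delta'$ / $\mathcal R,\Gamma,\Gamma',x:A\to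 B\Rightarrow\Delta,\Delta'$; $\to$R: $\mathcal R,\Gamma,x:A\Rightarrow\Delta,x:B$ / $\mathcal R,\Gamma\Rightarrow\Delta,x:A\to B$; $\wedge$L: $\mathcal R,\Gamma,x:A_i\Rightarrow\Delta$ / $\mathcal R,\Gamma,x:A_0\wedge A_1\Rightarrow\Delta$; $\wedge$R: $\mathcal R,\Gamma\Rightarrow\Delta,x:A$ and $\mathcal R,\Gamma\Rightarrow\Delta,x:B$ / $\mathcal R,\Gamma\Rightarrow\Delta,x:A\wedge B$; $\vee$L: $\mathcal R,\Gamma,x:A\Rightarrow\Delta$ and $\mathcal R,\Gamma,x:B\Rightarrow\Delta$ / $\mathcal R,\Gamma,x:A\vee B\Rightarrow\Delta$; $\vee$R: $\mathcal R,\Gamma\Rightarrow\Delta,x:A_i$ / $\mathcal R,\Gamma\Rightarrow\Delta,x:A_0\vee A_1$; $\Diamond$L ($y$ fresh): $\mathcal R,xRy,\Gamma,y:A\Rightarrow\Delta$ / $\mathcal R,\Gamma,x:\Diamond A\Rightarrow\Delta$; $\Diamond$R: $\mathcal R,xRy,\Gamma\Rightarrow\Delta,y:A$ / $\mathcal R,xRy,\Gamma\Rightarrow\Delta,x:\Diamond A$; $\Box$R ($y$ fresh): $\mathcal R,xRy,\Gamma\Rightarrow\Delta,y:A$ / $\mathcal R,\Gamma\Rightarrow\Delta,x:\Box A$; $\Box$L: $\mathcal R,xRy,\Gamma,y:A\Rightarrow\Delta$ / $\mathcal R,xRy,\Gamma,x:\Box A\Rightarrow\Delta$; tr: $\mathcal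 R,xRy,yRz,xRz,\Gamma\Rightarrow\Delta$ / $\mathcal R,xRy,yRz,\Gamma\Rightarrow\Delta$. $\mathsf{labIK4}$: restriction to sequents with exactly one labelled formula on the right. Quasi-tree-like: $\mathcal R$ is a tree if some root $x_0\in\mathrm{Var}(\mathcal R)$ reaches each other label by a unique $R$-chain in $\mathcal R$; a quasi-tree if $\mathcal R_0\subseteq\mathcal R\subseteq\mathcal R_0^+$ for a tree $\mathcal R_0$; $\mathcal R,\Gamma\Rightarrow x:A$ is quasi-tree-like if either $\mathcal R=\emptyset$ and $\mathrm{Var}(\Gamma)\subseteq\{x\}$, or $\mathcal R$ is a quasi-tree containing all labels of $\Gamma$ and $x$. Birelational models $\mathcal B=(W,\le,R^{\mathcal B},V)$ with conditions (F1) $w\le w',wR^{\mathcal B}v\Rightarrow\exists v'(v\le v', w'R^{\mathcal B}v')$, (F2) $wR^{\mathcal B}v,v\le v'\Rightarrow\exists w'(w\le w',w'R^{\mathcal B}v')$, monotone $V$; satisfaction is intuitionistic for $\to$, $w\models\Box A$ iff for all $w'\ge w$ and $w'R^{\mathcal B}v$, $v\models A$; $w\models\Diamond A$ iff some $v$ with $wR^{\mathcal B}v$ satisfies $A$. $\mathsf{BIGL}$: $R^{\mathcal B}$ transitive and no infinite chain $x_1\le y_1R^{\mathcal B}x_2\le y_2R^{\mathcal B}\cdots$. An interpretation of a sequent $S$ into $\mathcal B$ is $\mathcal I:\mathrm{Var}(S)\to W$ with $\mathcal I(u)R^{\mathcal B}\mathcal I(v)$ whenever $uRv\in\mathcal R$;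 $\mathcal B,\mathcal I\models(\mathcal R,\Gamma\Rightarrow x:A)$ iff ($\mathcal B,\mathcal I(y)\models B$ for all $y:B\in\Gamma$) implies $\mathcal B,\mathcal I(x)\models A$. *)

(* Defs.v *)
From Stdlib Require Import List Relations Permutation.
Import ListNotations.

Inductive form : Type :=
| FVar : nat -> form
| FBot : form
| FAnd : form -> form -> form
| FOr  : form -> form -> form
| FImp : form -> form -> form
| FBox : form -> form
| FDia : form -> form.

(* A relational atom xRy is the pair (x,y).
   The set R of relational atoms is represented by a list (read as a set,
   via membership); the multiset Gamma by a list (read up to permutation).
   labIK4 sequents have exactly one labelled formula on the right. *)
Record sequent : Type := mkSeq {
  rel  : list (nat * nat);
  ant  : list (nat * form);
  slab : nat;
  sfor : form }.

Definition in_rel_labels (R : list (nat * nat)) (z : nat) : Prop :=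
  exists p, In p R /\ (fst p = z \/ snd p = z).

Definition in_var (S : sequent) (z : nat) : Prop :=
  in_rel_labels (rel S) z \/ (exists B, In (z, B) (ant S)) \/ slab S = z.

(* R-chains: a = c0 R c1 R ... R cn = b, with l = [c1; ...; cn]. *)
Fixpoint chain (R : list (nat * nat)) (a : nat) (l : list nat) (b : nat) : Prop :=
  match l with
  | [] => a = b
  | c :: l' => In (a, c) R /\ chain R c l' b
  end.

Definition is_tree (R0 : list (nat * nat)) : Prop :=
  exists x0, in_rel_labels R0 x0 /\
    forall y, in_rel_labels R0 y -> y <> x0 -> exists! l, chain R0 x0 l y.

Definition is_quasi_tree (R : list (nat * nat)) : Prop :=
  exists R0, is_tree R0 /\
    (forall p, In p R0 -> In p R) /\
    (forall a b, In (a, b) R -> clos_trans nat (fun u v => In (u, v) R0) a b).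

Definition quasi_tree_like (S : sequent) : Prop :=
  (rel S = [] /\ forall y B, In (y, B) (ant S) -> y = slab S)
  \/ (is_quasi_tree (rel S)
      /\ (forall y B, In (y, B) (ant S) -> in_rel_labels (rel S) y)
      /\ in_rel_labels (rel S) (slab S)).

Definition fresh (y : nat) (S : sequent) : Prop := ~ in_var S y.

(* Rule instances of labIK4 other than thinning: labIK4_rule prems concl.
   Multiset contexts are matched up to permutation; "R, xRy" in a conclusion
   (a set) is expressed by membership of xRy in R.
   Right weakening / right contraction have no instances in labIK4 (they would
   need a sequent with zero resp. two formulas on the right). *)
Inductive labIK4_rule : list sequent -> sequent -> Prop :=
| r_id : forall R x p G,
    Permutation G [(x, FVar p)] ->
    labIK4_rule [] (mkSeq R G x (FVar p))
| r_botL : forall R x G G0 z C,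
    Permutation G ((x, FBot) :: G0) ->
    labIK4_rule [] (mkSeq R G z C)
| r_cut : forall R G G1 G2 x A z C,
    Permutation G (G1 ++ G2) ->
    labIK4_rule [mkSeq R G1 x A; mkSeq R ((x, A) :: G2) z C] (mkSeq R G z C)
| r_wL : forall R G G0 x A z C,
    Permutation G ((x, A) :: G0) ->
    labIK4_rule [mkSeq R G0 z C] (mkSeq R G z C)
| r_cL : forall R G G0 x A z C,
    Permutation G ((x, A) :: G0) ->
    labIK4_rule [mkSeq R ((x, A) :: (x, A) :: G0) z C] (mkSeq R G z C)
| r_impL : forall R G G1 G2 x A B z C,
    Permutation G ((x, FImp A B) :: G1 ++ G2) ->
    labIK4_rule [mkSeq R G1 x A; mkSeq R ((x, B) :: G2) z C] (mkSeq R G z C)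
| r_impR : forall R G x A B,
    labIK4_rule [mkSeq R ((x, A) :: G) x B] (mkSeq R G x (FImp A B))
| r_andL0 : forall R G G0 x A0 A1 z C,
    Permutation G ((x, FAnd A0 A1) :: G0) ->
    labIK4_rule [mkSeq R ((x, A0) :: G0) z C] (mkSeq R G z C)
| r_andL1 : forall R G G0 x A0 A1 z C,
    Permutation G ((x, FAnd A0 A1) :: G0) ->
    labIK4_rule [mkSeq R ((x, A1) :: G0) z C] (mkSeq R G z C)
| r_andR : forall R G x A B,
    labIK4_rule [mkSeq R G x A; mkSeq R G x B] (mkSeq R G x (FAnd A B))
| r_orL : forall R G G0 x A B z C,
    Permutation G ((x, FOr A B) :: G0) ->
    labIK4_rule [mkSeq R ((x, A) :: G0) z C; mkSeq R ((x, B) :: G0) z C]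
                (mkSeq R G z C)
| r_orR0 : forall R G x A0 A1,
    labIK4_rule [mkSeq R G x A0] (mkSeq R G x (FOr A0 A1))
| r_orR1 : forall R G x A0 A1,
    labIK4_rule [mkSeq R G x A1] (mkSeq R G x (FOr A0 A1))
| r_diaL : forall R G G0 x y A z C,
    Permutation G ((x, FDia A) :: G0) ->
    fresh y (mkSeq R G z C) ->
    labIK4_rule [mkSeq ((x, y) :: R) ((y, A) :: G0) z C] (mkSeq R G z C)
| r_diaR : forall R G x y A,
    In (x, y) R ->
    labIK4_rule [mkSeq R G y A] (mkSeq R G x (FDia A))
| r_boxR : forall R G x y A,
    fresh y (mkSeq R G x (FBox A)) ->
    labIK4_rule [mkSeq ((x, y) :: R) G y A] (mkSeq R G x (FBox A))
| r_boxL : forall R G G0 x y A z C,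
    In (x, y) R ->
    Permutation G ((x, FBox A) :: G0) ->
    labIK4_rule [mkSeq R ((y, A) :: G0) z C] (mkSeq R G z C)
| r_tr : forall R G x y w z C,
    In (x, y) R -> In (y, w) R ->
    labIK4_rule [mkSeq ((x, w) :: R) G z C] (mkSeq R G z C).

Record model : Type := mkModel {
  W : Type;
  le : W -> W -> Prop;
  Rm : W -> W -> Prop;
  V : nat -> W -> Prop;
  le_refl : forall w, le w w;
  le_trans : forall u v w, le u v -> le v w -> le u w;
  F1 : forall w w' v, le w w' -> Rm w v -> exists v', le v v' /\ Rm w' v';
  F2 : forall w v v', Rm w v -> le v v' -> exists w', le w w' /\ Rm w' v';
  V_mono : forall p w w', le w w' -> V p w -> V p w' }.

Fixpoint sat (M : model) (w : W M) (A : form) : Prop :=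
  match A with
  | FVar p => V M p w
  | FBot => False
  | FAnd A B => sat M w A /\ sat M w B
  | FOr A B => sat M w A \/ sat M w B
  | FImp A B => forall w', le M w w' -> sat M w' A -> sat M w' B
  | FBox A => forall w' v, le M w w' -> Rm M w' v -> sat M v A
  | FDia A => exists v, Rm M w v /\ sat M v A
  end.

Definition BIGL (M : model) : Prop :=
  (forall u v w, Rm M u v -> Rm M v w -> Rm M u w) /\
  ~ (exists (xs ys : nat -> W M),
       forall n, le M (xs n) (ys n) /\ Rm M (ys n) (xs (S n))).

(* Interpretations are total maps on labels; only their values on Var(S)
   matter. *)
Definition interpretation (M : model) (S : sequent) (I : nat -> W M) : Prop :=
  forall u v, In (u, v) (rel S) -> Rm M (I u) (I v).

Definition sat_seq (M : model) (I : nat -> W M) (S : sequent) : Prop :=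
  (forall y B, In (y, B) (ant S) -> sat M (I y) B) -> sat M (I (slab S)) (sfor S).

(* Main.v *)
Require Import Defs.
From Stdlib Require Import List Relations Permutation Classical ClassicalEpsilon.
Import ListNotations.

Lemma persist (M : model) : forall A w w', le M w w' -> sat M w A -> sat M w' A.
Proof.
  induction A; simpl; intros w w' Hle H.
  - eapply V_mono; eauto.
  - exact H.
  - destruct H; split; eauto.
  - destruct H; [left|right]; eauto.
  - intros u Hu. apply H. eapply le_trans; eauto.
  - intros u v Hu. apply H. eapply le_trans; eauto.
  - destruct H as [v [Hv Hs]]. destruct (F1 M _ _ _ Hle Hv) as [v' [Hv' Hr]].
    exists v'; split; eauto.
Qed.

Lemma bigl_irrefl (M : model) : BIGL M -> forall w, ~ Rm M w w.
Proof.
  intros [_ H] w Hw. apply H. exists (fun _ => w), (fun _ => w).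
  intros; split; [apply le_refl|exact Hw].
Qed.

Fixpoint lst (a : nat) (l : list nat) : nat :=
  match l with [] => a | c :: l' => lst c l' end.

Lemma chain_lst R a l b : chain R a l b -> lst a l = b.
Proof. revert a; induction l; simpl; intros a' H; [auto|destruct H; eauto]. Qed.

Lemma chain_app R a l1 m l2 b :
  chain R a l1 m -> chain R m l2 b -> chain R a (l1 ++ l2) b.
Proof.
  revert a; induction l1; simpl; intros a' H1 H2; [subst; auto|].
  destruct H1; split; eauto.
Qed.

Lemma chain_app_inv R a l1 l2 b :
  chain R a (l1 ++ l2) b -> chain R a l1 (lst a l1) /\ chain R (lst a l1) l2 b.
Proof.
  revert a; induction l1 as [|c l1 IH]; simpl; intros a' H; [auto|].
  destruct H as [H1 H2]. apply IH in H2. destruct H2; auto.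
Qed.

Lemma chain_snoc R a l c b :
  chain R a (l ++ [c]) b -> chain R a l (lst a l) /\ In (lst a l, c) R /\ c = b.
Proof.
  intro H. apply chain_app_inv in H. destruct H as [H1 [H2 H3]]. auto.
Qed.

Lemma chain_label R a c l b : chain R a (c :: l) b -> in_rel_labels R b.
Proof.
  revert a c; induction l; simpl; intros a' c' [H1 H2].
  - subst. exists (a', b); simpl; auto.
  - eauto.
Qed.

Lemma chain_Rm (M : model) (I : nat -> W M) R
  (HI : forall u v, In (u, v) R -> Rm M (I u) (I v))
  (Htr : forall u v w, Rm M u v -> Rm M v w -> Rm M u w) :
  forall l a c b, chain R a (c :: l) b -> Rm M (I a) (I b).
Proof.
  induction l; simpl; intros a' c' b [H1 H2].
  - subst; auto.
  - eapply Htr; [apply HI; exact H1|]. eapply IHl. exact H2.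
Qed.

Definition step (M : model) (o n v : W M) : W M :=
  match excluded_middle_informative (exists v', le M v v' /\ Rm M n v') with
  | left H => proj1_sig (constructive_indefinite_description _ H)
  | right _ => v
  end.

Lemma step_spec (M : model) o n v :
  le M o n -> Rm M o v -> le M v (step M o n v) /\ Rm M n (step M o n v).
Proof.
  intros Hle Hr. unfold step.
  destruct excluded_middle_informative as [H|H].
  - destruct constructive_indefinite_description; simpl; auto.
  - exfalso; apply H. exact (F1 M _ _ _ Hle Hr).
Qed.

Fixpoint push (M : model) (I : nat -> W M) (a : nat) (n : W M) (l : list nat) : W M :=
  match l with [] => n | c :: l' => push M I c (step M (I a) n (I c)) l' end.

Lemma push_snoc M I l : forall a n c,
  push M I a n (l ++ [c]) = step M (I (lst a l)) (push M I a n l) (I c).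
Proof. induction l; simpl; intros; auto. Qed.

Lemma push_le M I R (HI : forall u v, In (u, v) R -> Rm M (I u) (I v)) :
  forall l a n b, chain R a l b -> le M (I a) n -> le M (I b) (push M I a n l).
Proof.
  induction l; simpl; intros a' n b H Hle; [subst; auto|].
  destruct H as [H1 H2]. apply IHl; auto.
  apply step_spec; auto.
Qed.

Lemma lift_step (M : model) (R0 : list (nat * nat)) (x0 : nat) (I : nat -> W M)
  (HI : forall u v, In (u, v) R0 -> Rm M (I u) (I v))
  (Hex : forall z, in_rel_labels R0 z -> exists l, chain R0 x0 l z)
  (Huniq : forall z l1 l2, chain R0 x0 l1 z -> chain R0 x0 l2 z -> l1 = l2)
  (y : nat) (ly : list nat) (Hly : chain R0 x0 ly y)
  (w' : W M) (Hw : le M (I y) w')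
  (I1 : nat -> W M) (H1le : forall z, le M (I z) (I1 z))
  (H1R : forall u v, In (u, v) R0 -> Rm M (I1 u) (I1 v))
  (Hin : forall u, In (u, y) R0 -> Rm M (I1 u) w') :
  exists I2, (forall z, le M (I z) (I2 z)) /\ I2 y = w' /\
    (forall u v, In (u, v) R0 -> Rm M (I2 u) (I2 v)).
Proof.
  assert (Hu : forall z l1 l2, chain R0 y l1 z -> chain R0 y l2 z -> l1 = l2).
  { intros z l1 l2 H1 H2. apply app_inv_head with ly.
    apply Huniq with z; eapply chain_app; eauto. }
  set (J := fun z => match excluded_middle_informative (exists l, chain R0 y l z) with
     | left H => push M I y w' (proj1_sig (constructive_indefinite_description _ H))
     | right _ => I1 z end).
  assert (HJ : forall z l, chain R0 y l z -> J z = push M I y w' l).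
  { intros z l Hl. unfold J. destruct excluded_middle_informative as [H|H].
    - destruct constructive_indefinite_description as [l0 Hl0]; simpl.
      rewrite (Hu _ _ _ Hl0 Hl). reflexivity.
    - exfalso; eauto. }
  assert (HJn : forall z, ~ (exists l, chain R0 y l z) -> J z = I1 z).
  { intros z Hz. unfold J. destruct excluded_middle_informative as [H|H]; tauto. }
  exists J. split; [|split].
  - intro z. destruct (classic (exists l, chain R0 y l z)) as [[l Hl]|Hn].
    + rewrite (HJ _ _ Hl). eapply push_le; eauto.
    + rewrite HJn; auto.
  - rewrite (HJ y []); simpl; auto.
  - intros u v Huv.
    destruct (classic (exists l, chain R0 y l u)) as [[lu Hlu]|Hnu].
    + assert (Hv : chain R0 y (lu ++ [v]) v).
      { eapply chain_app; eauto. simpl; auto. }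
      rewrite (HJ _ _ Hv), (HJ _ _ Hlu), push_snoc.
      rewrite (chain_lst _ _ _ _ Hlu).
      apply step_spec; [|apply HI; auto].
      rewrite <- (HJ _ _ Hlu). rewrite (HJ _ _ Hlu). eapply push_le; eauto.
    + rewrite (HJn u Hnu).
      destruct (classic (exists l, chain R0 y l v)) as [[lv Hlv]|Hnv].
      * rewrite (HJ _ _ Hlv).
        destruct lv as [|c lv'] using rev_ind.
        -- simpl in *. subst. auto.
        -- clear IHlv'. apply chain_snoc in Hlv. destruct Hlv as [Hc1 [Hc2 Hc3]]. subst c.
           exfalso. apply Hnu.
           assert (Hlab : in_rel_labels R0 u) by (exists (u, v); simpl; auto).
           destruct (Hex u Hlab) as [lu0 Hlu0].
           assert (E : lu0 ++ [v] = (ly ++ lv') ++ [v]).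
           { apply Huniq with v.
             - eapply chain_app; eauto. simpl; auto.
             - eapply chain_app; [eapply chain_app; eauto|]. simpl; auto. }
           apply app_inj_tail in E. destruct E as [E _]. subst lu0.
           apply chain_app_inv in Hlu0. destruct Hlu0 as [Ha Hb].
           rewrite (chain_lst _ _ _ _ Hly) in Hb. eauto.
      * rewrite (HJn v Hnv). auto.
Qed.

Lemma lift_tree (M : model) (R0 : list (nat * nat)) (x0 : nat) (I : nat -> W M)
  (HI : forall u v, In (u, v) R0 -> Rm M (I u) (I v))
  (Hex : forall z, in_rel_labels R0 z -> exists l, chain R0 x0 l z)
  (Huniq : forall z l1 l2, chain R0 x0 l1 z -> chain R0 x0 l2 z -> l1 = l2) :
  forall l y w', chain R0 x0 l y -> le M (I y) w' ->
  exists I', (forall z, le M (I z) (I' z)) /\ I' y = w' /\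
    (forall u v, In (u, v) R0 -> Rm M (I' u) (I' v)).
Proof.
  induction l as [|c l IH] using rev_ind; intros y w' Hl Hw.
  - simpl in Hl; subst y.
    eapply lift_step with (ly := []) (I1 := I); eauto.
    + simpl; auto.
    + intro; apply le_refl.
    + intros u Hu. exfalso.
      assert (Hlab : in_rel_labels R0 u) by (exists (u, x0); simpl; auto).
      destruct (Hex u Hlab) as [lu Hlu].
      assert (E : lu ++ [x0] = []).
      { apply Huniq with x0; [eapply chain_app; eauto; simpl; auto| simpl; auto]. }
      destruct lu; discriminate.
  - pose proof Hl as Hl'.
    apply chain_snoc in Hl. destruct Hl as [Ha [Hay Hc]]. subst c.
    destruct (F2 M _ _ _ (HI _ _ Hay) Hw) as [a' [Ha' Ra']].
    destruct (IH _ _ Ha Ha') as [I1 [H1le [H1a H1R]]].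
    eapply lift_step with (ly := l ++ [y]) (I1 := I1); eauto.
    intros u Hu.
    assert (Hlab : in_rel_labels R0 u) by (exists (u, y); simpl; auto).
    destruct (Hex u Hlab) as [lu Hlu].
    assert (E : lu ++ [y] = l ++ [y]).
    { apply Huniq with y; [eapply chain_app; eauto; simpl; auto| auto]. }
    apply app_inj_tail in E. destruct E as [E _]. subst lu.
    rewrite <- (chain_lst _ _ _ _ Hlu). rewrite H1a. exact Ra'.
Qed.

Lemma ct_labels R0 a b :
  clos_trans nat (fun u v => In (u, v) R0) a b -> in_rel_labels R0 a /\ in_rel_labels R0 b.
Proof.
  induction 1 as [a b H| a b c _ [H1 _] _ [_ H2]].
  - split; exists (a, b); simpl; auto.
  - auto.
Qed.

Lemma ct_Rm (M : model) (I : nat -> W M) R0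
  (HI : forall u v, In (u, v) R0 -> Rm M (I u) (I v))
  (Htr : forall u v w, Rm M u v -> Rm M v w -> Rm M u w) a b :
  clos_trans nat (fun u v => In (u, v) R0) a b -> Rm M (I a) (I b).
Proof. induction 1; eauto. Qed.

Lemma lift_seq (M : model) (S : sequent) (I : nat -> W M) :
  quasi_tree_like S -> BIGL M -> interpretation M S I ->
  forall w', le M (I (slab S)) w' ->
  exists I', (forall z, le M (I z) (I' z)) /\ I' (slab S) = w' /\ interpretation M S I'.
Proof.
  intros Hq HB HI w' Hw.
  destruct Hq as [[HR _] | [[R0 [[x0 [Hx0 Hroot]] [Hsub Hct]]] [_ Hx]]].
  - exists (fun z => if PeanoNat.Nat.eq_dec z (slab S) then w' else I z).
    split; [|split].
    + intro z. destruct PeanoNat.Nat.eq_dec; [subst; auto|apply le_refl].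
    + destruct PeanoNat.Nat.eq_dec; congruence.
    + intros u v H. rewrite HR in H. destruct H.
  - assert (Htr := proj1 HB). assert (Hirr := bigl_irrefl M HB).
    assert (HI0 : forall u v, In (u, v) R0 -> Rm M (I u) (I v)) by auto.
    assert (Hex : forall z, in_rel_labels R0 z -> exists l, chain R0 x0 l z).
    { intros z Hz. destruct (PeanoNat.Nat.eq_dec z x0) as [->|Hne].
      - exists []; simpl; auto.
      - destruct (Hroot z Hz Hne) as [l [Hl _]]; eauto. }
    assert (Huniq : forall z l1 l2, chain R0 x0 l1 z -> chain R0 x0 l2 z -> l1 = l2).
    { assert (Hnil : forall l, chain R0 x0 l x0 -> l = []).
      { intros [|c l] H; auto. exfalso. apply (Hirr (I x0)).
        eapply chain_Rm; eauto. }
      intros z l1 l2 H1 H2. destruct (PeanoNat.Nat.eq_dec z x0) as [->|Hne].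
      - rewrite (Hnil _ H1), (Hnil _ H2); auto.
      - destruct l1 as [|c l1]; [simpl in H1; congruence|].
        destruct (Hroot z (chain_label _ _ _ _ _ H1) Hne) as [l0 [_ Hu]].
        rewrite <- (Hu _ H1). apply Hu; auto. }
    assert (HxR0 : in_rel_labels R0 (slab S)).
    { destruct Hx as [[a b] [Hp Hab]]. apply Hct in Hp. apply ct_labels in Hp.
      simpl in Hab; destruct Hab as [<-| <-]; tauto. }
    destruct (Hex _ HxR0) as [lx Hlx].
    destruct (lift_tree M R0 x0 I HI0 Hex Huniq lx (slab S) w' Hlx Hw)
      as [I' [Hle [Heq HR]]].
    exists I'; split; [|split]; auto.
    intros u v H. apply Hct in H. eapply ct_Rm; eauto.
Qed.

Lemma perm_hd {A} (G G0 : list A) a : Permutation G (a :: G0) -> In a G.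
Proof. intro H. eapply Permutation_in; [apply Permutation_sym; exact H|]. left; auto. Qed.
Lemma perm_tl {A} (G G0 : list A) a b : Permutation G (a :: G0) -> In b G0 -> In b G.
Proof. intros H Hb. eapply Permutation_in; [apply Permutation_sym; exact H|]. right; auto. Qed.
Lemma perm_app_l {A} (G G1 G2 : list A) b : Permutation G (G1 ++ G2) -> In b G1 -> In b G.
Proof. intros H Hb. eapply Permutation_in; [apply Permutation_sym; exact H|]. apply in_or_app; auto. Qed.
Lemma perm_app_r {A} (G G1 G2 : list A) b : Permutation G (G1 ++ G2) -> In b G2 -> In b G.
Proof. intros H Hb. eapply Permutation_in; [apply Permutation_sym; exact H|]. apply in_or_app; auto. Qed.

Ltac same_I I := exists I; split; [simpl; auto|]; split; [assumption|];
  split; [|intros; apply le_refl].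

Theorem mainTheorem5 :
  forall (S : sequent) (M : model) (I : nat -> W M),
    quasi_tree_like S ->
    BIGL M ->
    interpretation M S I ->
    ~ sat_seq M I S ->
    forall prems : list sequent,
      labIK4_rule prems S ->
      exists S' (I' : nat -> W M),
        In S' prems /\
        interpretation M S' I' /\
        ~ sat_seq M I' S' /\
        (forall z, in_var S z -> le M (I z) (I' z)).
Proof.
  intros S M I Hq HB HI Hns prems Hr.
  assert (Hant : forall y B, In (y, B) (ant S) -> sat M (I y) B).
  { intros y B Hy. apply NNPP; intro Hn. apply Hns. intro H. exfalso; eauto. }
  assert (Hc : ~ sat M (I (slab S)) (sfor S)).
  { intro H. apply Hns. intro; exact H. }
  unfold sat_seq.
  destruct Hr; simpl in *.
  - exfalso. apply Hc. apply (Hant x (FVar p)). eapply perm_hd; eauto.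
  - exfalso. apply (Hant x FBot). eapply perm_hd; eauto.
  -
    destruct (classic (sat M (I x) A)) as [HA|HA].
    + exists (mkSeq R ((x, A) :: G2) z C). same_I I. simpl. intro Hp; apply Hc, Hp.
      intros y B [E|Hy]; [inversion E; subst; auto|]. eapply Hant, perm_app_r; eauto.
    + exists (mkSeq R G1 x A). same_I I. simpl. intro Hp; apply HA, Hp.
      intros y B Hy. eapply Hant, perm_app_l; eauto.
  -
    exists (mkSeq R G0 z C). same_I I. simpl. intro Hp; apply Hc, Hp.
    intros y B Hy. eapply Hant, perm_tl; eauto.
  -
    exists (mkSeq R ((x, A) :: (x, A) :: G0) z C). same_I I. simpl. intro Hp; apply Hc, Hp.
    intros y B [E|[E|Hy]]; try (inversion E; subst; eapply Hant, perm_hd; eauto).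
    eapply Hant, perm_tl; eauto.
  -
    assert (Himp := Hant _ _ (perm_hd _ _ _ H)). simpl in Himp.
    destruct (classic (sat M (I x) A)) as [HA|HA].
    + exists (mkSeq R ((x, B) :: G2) z C). same_I I. simpl. intro H'; apply Hc, H'.
      intros y B' [E|Hy]; [inversion E; subst; apply Himp; auto; apply le_refl|].
      eapply Hant. eapply perm_tl; eauto. apply in_or_app; auto.
    + exists (mkSeq R G1 x A). same_I I. simpl. intro H'; apply HA, H'.
      intros y B' Hy. eapply Hant. eapply perm_tl; eauto. apply in_or_app; auto.
  -
    simpl in Hc.
    assert (Hw : exists w', le M (I x) w' /\ sat M w' A /\ ~ sat M w' B).
    { apply NNPP; intro Hn. apply Hc. intros w' Hw HA. apply NNPP; intro HB'.
      apply Hn; eauto. }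
    destruct Hw as [w' [Hw [HA HnB]]].
    destruct (lift_seq M (mkSeq R G x (FImp A B)) I Hq HB HI w' Hw) as [I' [Hle [Heq HI']]].
    simpl in Heq.
    exists (mkSeq R ((x, A) :: G) x B), I'. split; [simpl; auto|]. split; [exact HI'|].
    split; [|intros; apply Hle].
    simpl. intro Hp; apply HnB. rewrite <- Heq. apply Hp.
    intros y B' [E|Hy]; [injection E as <- <-; rewrite Heq; auto|].
    eapply persist; [apply Hle|]. eauto.
  -
    assert (Ha := Hant _ _ (perm_hd _ _ _ H)). simpl in Ha.
    exists (mkSeq R ((x, A0) :: G0) z C). same_I I. simpl. intro H'; apply Hc, H'.
    intros y B' [E|Hy]; [inversion E; subst; tauto|]. eapply Hant, perm_tl; eauto.
  -
    assert (Ha := Hant _ _ (perm_hd _ _ _ H)). simpl in Ha.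
    exists (mkSeq R ((x, A1) :: G0) z C). same_I I. simpl. intro H'; apply Hc, H'.
    intros y B' [E|Hy]; [inversion E; subst; tauto|]. eapply Hant, perm_tl; eauto.
  -
    destruct (classic (sat M (I x) A)) as [HA|HA].
    + exists (mkSeq R G x B). same_I I. simpl. intro H'; apply Hc; split; auto.
    + exists (mkSeq R G x A). same_I I. simpl. intro H'; apply HA, H'; auto.
  -
    assert (Ho := Hant _ _ (perm_hd _ _ _ H)). simpl in Ho.
    destruct Ho as [HA|HA].
    + exists (mkSeq R ((x, A) :: G0) z C). same_I I. simpl. intro H'; apply Hc, H'.
      intros y B' [E|Hy]; [inversion E; subst; auto|]. eapply Hant, perm_tl; eauto.
    + exists (mkSeq R ((x, B) :: G0) z C). same_I I. simpl. intro H'; apply Hc, H'.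
      intros y B' [E|Hy]; [inversion E; subst; auto|]. eapply Hant, perm_tl; eauto.
  -
    exists (mkSeq R G x A0). same_I I. simpl. intro H'; apply Hc; left; auto.
  -
    exists (mkSeq R G x A1). same_I I. simpl. intro H'; apply Hc; right; auto.
  -
    assert (Hd := Hant _ _ (perm_hd _ _ _ H)). simpl in Hd.
    destruct Hd as [v [Hv HA]].
    unfold fresh, in_var in H0; simpl in H0.
    assert (Hny : forall u, u = y -> ~ (in_rel_labels R u \/ (exists B, In (u, B) G) \/ z = u)).
    { intros u ->; auto. }
    set (I' := fun u => if PeanoNat.Nat.eq_dec u y then v else I u).
    assert (HI'o : forall u, u <> y -> I' u = I u).
    { intros u Hu; unfold I'; destruct PeanoNat.Nat.eq_dec; congruence. }
    assert (Hxy : x <> y).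
    { intro E; subst. apply H0. right; left. exists (FDia A). eapply perm_hd; eauto. }
    exists (mkSeq ((x, y) :: R) ((y, A) :: G0) z C), I'.
    split; [simpl; auto|]. split; [|split].
    + intros a b [E|Hab]; simpl.
      * inversion E; subst. rewrite HI'o by auto. unfold I'.
        destruct PeanoNat.Nat.eq_dec; [auto|congruence].
      * rewrite !HI'o; [apply HI; auto| |];
        intro E; subst; apply H0; left; eexists; split; eauto; simpl; auto.
    + simpl. rewrite HI'o by (intro E; subst; apply H0; auto).
      intro H'; apply Hc, H'.
      intros u B' [E|Hu].
      * inversion E; subst. unfold I'. destruct PeanoNat.Nat.eq_dec; [auto|congruence].
      * assert (HuG : In (u, B') G) by (eapply perm_tl; eauto).
        rewrite HI'o; [eauto|]. intro E; subst; apply H0; right; left; eauto.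
    + intros u Hu. rewrite HI'o; [apply le_refl|]. intro E; subst; contradiction.
  -
    exists (mkSeq R G y A). same_I I. simpl. intro H'; apply Hc. exists (I y); split; auto.
  -
    simpl in Hc.
    assert (Hw : exists w' v, le M (I x) w' /\ Rm M w' v /\ ~ sat M v A).
    { apply NNPP; intro Hn. apply Hc. intros w' v Hw Hv. apply NNPP; intro HA.
      apply Hn; eauto. }
    destruct Hw as [w' [v [Hw [Hv HnA]]]].
    destruct (lift_seq M (mkSeq R G x (FBox A)) I Hq HB HI w' Hw) as [I1 [Hle [Heq HI1]]].
    simpl in Heq.
    unfold fresh, in_var in H; simpl in H.
    set (I' := fun u => if PeanoNat.Nat.eq_dec u y then v else I1 u).
    assert (HI'o : forall u, u <> y -> I' u = I1 u).
    { intros u Hu; unfold I'; destruct PeanoNat.Nat.eq_dec; congruence. }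
    assert (Hxy : x <> y) by (intro E; subst; apply H; auto).
    exists (mkSeq ((x, y) :: R) G y A), I'.
    split; [simpl; auto|]. split; [|split].
    + intros a b [E|Hab]; simpl.
      * injection E as <- <-. rewrite HI'o by auto. rewrite Heq. unfold I'.
        destruct PeanoNat.Nat.eq_dec; [auto|congruence].
      * rewrite !HI'o; [apply HI1; auto| |];
        intro E; subst; apply H; left; eexists; split; eauto; simpl; auto.
    + simpl. unfold I' at 2. destruct PeanoNat.Nat.eq_dec; [|congruence].
      intro H'; apply HnA, H'.
      intros u B' Hu. rewrite HI'o; [eapply persist; [apply Hle|]; eauto|].
      intro E; subst; apply H; right; left; eauto.
    + intros u Hu. rewrite HI'o; [apply Hle|]. intro E; subst; contradiction.
  -
    assert (Hb := Hant _ _ (perm_hd _ _ _ H0)). simpl in Hb.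
    exists (mkSeq R ((y, A) :: G0) z C). same_I I. simpl. intro H'; apply Hc, H'.
    intros u B' [E|Hu]; [inversion E; subst; eapply Hb; [apply le_refl|auto]|].
    eapply Hant, perm_tl; eauto.
  -
    exists (mkSeq ((x, w) :: R) G z C), I. split; [simpl; auto|]. split; [|split].
    + intros a b [E|Hab]; [inversion E; subst; eapply (proj1 HB); eauto|auto].
    + simpl. intro H'; apply Hc, H'. auto.
    + intros; apply le_refl.
Qed.
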